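(* Let $S$ be a connected surface without boundary, $K\subset S$ a compact connected set, and $U$ a residual domain of $K$. Let $\alpha:\,]0,1]\to U$ be a path such that $\lim_{t\to0}\alpha(t)=p\in K$ in $S$. Then there exists an ideal boundary point $b$ of $U$ which is relatively compact in $S$ such that $\lim_{t\to0}\alpha(t)=b$ in the ideal completion $B(U)$.
   Context: A residual domain of $K$ is a connected component of $S-K$. For a surface $X$, an ideal boundary component of $X$ is a decreasing sequence $V_1\supset V_2\supset\cdots$ of nonempty subsets of $X$ such that each $V_n$ is open in $X$ and connected, $cl_XV_n$ is not compact, $fr_XV_n$ is compact, and for every compact $C\subset X$ there is $n_0$ with $C\cap V_n=\emptyset$ for $n\ge n_0$; two such sequences $(V_n)$, $(V'_n)$ are equivalent if for every $n$ there is $m$ with $V_m\subset V'_n$, and vice versa. The ideal boundary $b(X)$ is the set of equivalence classes and $B(X)=X\sqcup b(X)$ is the ideal completion, with topology having as basis the sets $A\cup A'$, where $A\subset X$ is open connected with $fr_XA$ compact and $A'$ is the set of ideal boundary points represented by some $(V_n)$ with $V_n\subset A$ for all large $n$. An ideal boundary point of $U$ represented by $(V_n)$ is relatively compact in $S$ if some $V_n$ has compact closure in $S$. *)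

(* Defs.v *)
From HB Require Import structures.
From mathcomp Require Import all_boot all_order all_algebra.
From mathcomp Require Import all_classical all_reals all_analysis.
From mathcomp Require Import Rstruct Rstruct_topology.
Set Implicit Arguments. Unset Strict Implicit. Unset Printing Implicit Defensive.
Import Order.TTheory GRing.Theory Num.Theory.
Local Open Scope classical_set_scope.

Definition R2 := (Rdefinitions.R * Rdefinitions.R)%type.

Section Surfaces.
Context {S : topologicalType}.

Definition rel_open (X A : set S) := exists O : set S, open O /\ A = O `&` X.
Definition rel_closure (X A : set S) := closure A `&` X.
Definition rel_interior (X A : set S) :=
  \bigcup_(O in [set O | rel_open X O /\ O `<=` A]) O.
Definition rel_frontier (X A : set S) := rel_closure X A `\` rel_interior X A.

Definition ideal_bd_seq (X : set S) (V : nat -> set S) :=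
  (forall n, V n.+1 `<=` V n) /\
  (forall n, V n !=set0 /\ V n `<=` X /\ rel_open X (V n) /\ connected (V n) /\
             ~ compact (rel_closure X (V n)) /\ compact (rel_frontier X (V n))) /\
  (forall C : set S, compact C -> C `<=` X ->
     exists n0, forall n, (n0 <= n)%N -> C `&` V n = set0).

Definition ideal_bd_equiv (V V' : nat -> set S) :=
  (forall n, exists m, V m `<=` V' n) /\ (forall n, exists m, V' m `<=` V n).

Definition rel_compact_in_S (V : nat -> set S) := exists n, compact (closure (V n)).

(* Basic open neighbourhood A ∪ A' of the ideal point [V] in B(X):
   A open connected in X with compact frontier in X, and [V] ∈ A'. *)
Definition basic_nbhd_of_ideal (X : set S) (V : nat -> set S) (A : set S) :=
  A `<=` X /\ rel_open X A /\ connected A /\ compact (rel_frontier X A) /\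
  exists V', ideal_bd_seq X V' /\ ideal_bd_equiv V V' /\
             exists n0, forall n, (n0 <= n)%N -> V' n `<=` A.

Definition second_countable :=
  exists B : set (set S), countable B /\ (forall b, B b -> open b) /\
    forall O : set S, open O -> forall x, O x -> exists b, B b /\ b x /\ b `<=` O.

Definition locally_euclidean2 :=
  forall x : S, exists (O : set S) (W : set R2) (f : S -> R2) (g : R2 -> S),
    open O /\ O x /\ open W /\ f @` O = W /\
    {within O, continuous f} /\ {within W, continuous g} /\
    (forall y, O y -> g (f y) = y).

Definition surface := hausdorff_space S /\ second_countable /\ locally_euclidean2.

End Surfaces.

(* Main.v *)
Require Import Defs.
From HB Require Import structures.
From mathcomp Require Import all_boot all_order all_algebra.
From mathcomp Require Import all_classical all_reals all_analysis.
From mathcomp Require Import Rstruct Rstruct_topology.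
Import Order.TTheory GRing.Theory Num.Theory.
Local Open Scope classical_set_scope.
Local Open Scope ring_scope.
Lemma connected_setX {T U : topologicalType} (A : set T) (B : set U) :
  connected A -> connected B -> connected (A `*` B).
Proof.
move=> cA cB.
have [[a0 Aa0]|nA] := pselect (exists a, A a); last first.
  suff -> : A `*` B = set0 by exact: connected0.
  by apply/seteqP; split=> // -[x y] [/= Ax _]; apply: nA; exists x.
have [[b0 Bb0]|nB] := pselect (exists b, B b); last first.
  suff -> : A `*` B = set0 by exact: connected0.
  by apply/seteqP; split=> // -[x y] [/= _ By]; apply: nB; exists y.
have -> : A `*` B = \bigcup_(a in A)
   ((fun y => (a, y)) @` B `|` (fun x => (x, b0)) @` A).
  apply/seteqP; split=> [[x y] [/= Ax By]|[x y] [a Aa [[y' By' [<- <-]]|[x' Ax' [<- <-]]]]] //.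
  by exists x => //; left; exists y.
apply: bigcup_connected.
  by exists (a0, b0) => a Aa; right; exists a0.
move=> a Aa; apply: connectedU.
- by exists (a, b0); split; [exists b0|exists a].
- apply: connected_continuous_connected => //; apply: continuous_subspaceT.
  by move=> y; apply: cvg_pair; [exact: cvg_cst|exact: cvg_id].
- apply: connected_continuous_connected => //; apply: continuous_subspaceT.
  by move=> y; apply: cvg_pair; [exact: cvg_id|exact: cvg_cst].
Qed.

Lemma R2_ball_connected (z : R2) (e : Rdefinitions.R) : connected (ball z e).
Proof.
have -> : ball z e = ball z.1 e `*` ball z.2 e by [].
by apply: connected_setX; rewrite ball_itv; apply/connected_intervalP; apply: interval_is_interval.
Qed.

Lemma R2_open_ball (E : set R2) z : open E -> E z ->
  exists e : Rdefinitions.R, 0 < e /\ ball z e `<=` E.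
Proof.
move=> oE Ez; have /nbhs_ballP[e e0 H] : nbhs z E by apply: open_nbhs_nbhs.
by exists e.
Qed.

Lemma R2_compact_ball (z : R2) (e : Rdefinitions.R) : 0 < e ->
  exists C : set R2, compact C /\ ball z (e/2) `<=` C /\ C `<=` ball z e.
Proof.
move=> e0.
exists (closed_ball z.1 (e/2) `*` closed_ball z.2 (e/2)); split; [|split].
- by apply: compact_setX; apply: closed_ballR_compact; rewrite divr_gt0.
- by move=> [x y] [/= H1 H2]; split; apply: subset_closed_ball.
- have h : 0 < e / 2 < e by rewrite divr_gt0 //= ltr_pdivrMr // ltr_pMr // ltr1n.
  case/andP: h => h1 h2.
  by move=> [x y] [/= H1 H2]; split; apply: (closed_ball_subset h1 h2).
Qed.
Lemma open_setX' {T U : topologicalType} (A : set T) (B : set U) :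
  open A -> open B -> open (A `*` B).
Proof.
move=> oA oB; rewrite openE => -[a b] [/= Aa Bb]; rewrite /interior.
by exists (A, B) => //=; split; apply: open_nbhs_nbhs.
Qed.
Lemma R2_ball_open (z : R2) (e : Rdefinitions.R) : open (ball z e).
Proof.
have -> : ball z e = ball z.1 e `*` ball z.2 e by [].
apply: open_setX'.
- exact: (@ball_open _ Rdefinitions.R^o z.1 e).
- exact: (@ball_open _ Rdefinitions.R^o z.2 e).
Qed.

Section Local.
Context {S : topologicalType} (hS : locally_euclidean2 (S:=S)).

Lemma chart_local (x : S) (P : set S) : open P -> P x ->
  exists Q Q' C : set S, [/\ open Q /\ Q x /\ connected Q /\ Q `<=` P,
     open Q' /\ Q' x, compact C & Q' `<=` C /\ C `<=` P].
Proof.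
move=> oP Px.
have [Oc [W [f [g [oO [Ox [oW [fOW [cf [cg gf]]]]]]]]]] := hS x.
have Wg y : W y -> Oc (g y) /\ f (g y) = y.
  by rewrite -fOW => -[z Oz <-]; rewrite gf.
have cg' : {in W, continuous g} by rewrite -continuous_open_subspace.
have cf' : {in Oc, continuous f} by rewrite -continuous_open_subspace.
have imgE D : D `<=` W -> g @` D = Oc `&` f @^-1` D.
  move=> DW; apply/seteqP; split.
    by move=> _ [y Dy <-]; have [h1 h2] := Wg y (DW y Dy); split => //=; rewrite h2.
  by move=> z [Oz Dfz]; exists (f z) => //; rewrite gf.
have oE : open (W `&` g @^-1` P) by apply: (@continuous_inP _ _ _ g oW).1 cg' _ oP.
have Wfx : W (f x) by rewrite -fOW; exists x.
have [e [e0 eE]] : exists e : Rdefinitions.R, 0 < e /\ ball (f x) e `<=` W `&` g @^-1` P.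
  by apply: R2_open_ball oE _; split => //; rewrite /= gf.
have bW e' : ball (f x) e' `<=` ball (f x) e -> ball (f x) e' `<=` W.
  by move=> H y /H /eE [].
have [Cb [cCb [bC Cbb]]] := R2_compact_ball (f x) e e0.
exists (g @` ball (f x) e), (g @` ball (f x) (e/2)), (g @` Cb); split.
- split.
    rewrite imgE; last by apply: bW.
    apply: (@continuous_inP _ _ _ f oO).1 cf' _ _; exact: R2_ball_open.
  split; first by exists (f x); [exact: ballxx | rewrite gf].
  split; last by move=> _ [y /eE [_ Py] <-].
  apply: connected_continuous_connected; first exact: R2_ball_connected.
  by apply: continuous_subspaceW cg; apply: bW.
- split; last by exists (f x); [apply: ballxx; rewrite divr_gt0 | rewrite gf].
  rewrite imgE; last by apply: bW => y /bC /Cbb.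
  by apply: (@continuous_inP _ _ _ f oO).1 cf' _ (R2_ball_open _ _).
- apply: continuous_compact => //; apply: continuous_subspaceW cg.
  by move=> y /Cbb /eE [].
- by split; [move=> _ [y /bC Cy <-]; exists y | move=> _ [y /Cbb /eE [_ Py] <-]].
Qed.

End Local.
Lemma near0P (P : Rdefinitions.R -> Prop) : (\forall t \near 0^'+, P t) ->
  exists2 d : Rdefinitions.R, 0 < d & forall t, 0 < t -> t < d -> P t.
Proof.
move=> /nbhs_ballP [e /= e0 H]; exists e => // t t0 te; apply: H => //.
by rewrite /ball /= sub0r normrN gtr0_norm.
Qed.

Lemma near0_le (d : Rdefinitions.R) : 0 < d -> \forall t \near 0^'+, 0 < t <= d.
Proof.
move=> d0; apply/nbhs_ballP; exists d => //= t.
rewrite /ball /= sub0r normrN => H t0; rewrite t0 /=.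
by rewrite gtr0_norm // in H; rewrite ltW.
Qed.

Section Top.
Context {S : topologicalType} (hLE : locally_euclidean2 (S:=S)).

Lemma loc_conn (P : set S) x : open P -> P x ->
  exists Q, [/\ open Q, Q x, connected Q & Q `<=` P].
Proof.
move=> oP Px; have [Q [_ [_ [[oQ [Qx [cQ QP]]] _ _ _]]]] := chart_local hLE x P oP Px.
by exists Q.
Qed.

Lemma comp_open (A : set S) x : open A -> open (connected_component A x).
Proof.
move=> oA; rewrite openE => y cy.
have Ay := connected_component_sub cy.
have [Q [oQ Qy cQ QA]] := loc_conn A y oA Ay.
rewrite /interior; apply: (@filterS _ _ _ Q); last by apply: open_nbhs_nbhs.
move=> z Qz; rewrite (same_connected_component cy).
exact: (connected_component_max Qy QA cQ).
Qed.

Lemma comp_closure_sub (A : set S) x y : open A -> A y ->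
  closure (connected_component A x) y -> connected_component A x y.
Proof.
move=> oA Ay cly.
have [w [cxw cyw]] := cly _ (open_nbhs_nbhs (conj (comp_open A y oA) (connected_component_refl Ay))).
by apply: connected_component_trans cxw _; apply: connected_component_sym.
Qed.

End Top.
Lemma cover_nat {T : topologicalType} (C : set T) (e : nat -> set T) :
  compact C -> (forall n, open (e n)) -> C `<=` \bigcup_n e n ->
  exists N, C `<=` \bigcup_(i in [set i | (i < N)%N]) e i.
Proof.
move=> /compact_near_coveringP cC oe Ce.
have := cC nat \oo (fun i x => exists2 j, (j < i)%N & e j x) _.
case.
- move=> x /Ce [j _ ejx]; exists (e j, [set i | (j < i)%N]) => /=.
    split; [by apply: open_nbhs_nbhs; split | by exists j.+1].
  by move=> [y i] [/= ejy ji]; exists j.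
- move=> N _ HN; exists N => y Cy; have [j jN ejy] := HN N (leqnn N) y Cy; by exists j.
Qed.

Lemma enum_good {T : Type} (Bs G : set (set T)) : countable Bs -> G `<=` Bs ->
  exists e : nat -> set T, (forall n, e n = set0 \/ G (e n)) /\
    (forall b, G b -> exists n, e n = b).
Proof.
move=> cB GB.
have /countable_injP [f finj] : countable G.
  exact: (sub_countable (subset_card_le GB) cB).
exists (fun n => match pselect (exists b, G b /\ f b = n) with
                 | left H => proj1_sig (cid H) | right _ => set0 end).
split.
  by move=> n; case: pselect => [H|H]; [right; case: (cid H) => b [] | left].
move=> b Gb; exists (f b); case: pselect => [H|H]; last by exfalso; apply: H; exists b.
case: (cid H) => b' [Gb' fb'] /=; apply: finj => //; exact: mem_set.
Qed.

Fixpoint accum {T : Type} (A0 : set T) (f : nat -> set T) n :=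
  if n is m.+1 then accum A0 f m `|` f m else A0.

Lemma accum_mono {T : Type} (A0 : set T) f m n : (m <= n)%N -> accum A0 f m `<=` accum A0 f n.
Proof.
elim: n => [|n IH]; first by rewrite leqn0 => /eqP ->.
rewrite leq_eqVlt => /orP [/eqP -> //|]; rewrite ltnS => /IH H y /H Hy.
by left.
Qed.

Lemma accum_f {T : Type} (A0 : set T) f i n : (i < n)%N -> f i `<=` accum A0 f n.
Proof. by move=> H y fy; apply: (@accum_mono _ A0 f _ _ H); right. Qed.

Lemma accum_A0 {T : Type} (A0 : set T) f n : A0 `<=` accum A0 f n.
Proof. exact: (@accum_mono _ A0 f 0 n). Qed.

Lemma accum_sub {T : Type} (A0 B : set T) f n : A0 `<=` B -> (forall i, f i `<=` B) ->
  accum A0 f n `<=` B.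
Proof. by move=> AB fB; elim: n => //= n IH y [/IH|/fB]. Qed.

Lemma accum_compact {T : topologicalType} (A0 : set T) f n : compact A0 ->
  (forall i, compact (f i)) -> compact (accum A0 f n).
Proof. by move=> cA cf; elim: n => //= n IH; apply: compactU. Qed.

Theorem proposition4p2 (S : topologicalType) (K U : set S) (alpha : Rdefinitions.R -> S) (p : S) :
  surface (S := S) -> connected [set: S] ->
  compact K -> connected K ->
  (exists x, (~` K) x /\ U = connected_component (~` K) x) ->
  {within `]0, 1]%classic, continuous alpha} ->
  (forall t, `]0, 1]%classic t -> U (alpha t)) ->
  K p ->
  alpha @ 0^'+ --> p ->
  exists V : nat -> set S,
    ideal_bd_seq U V /\ rel_compact_in_S V /\
    forall A : set S, basic_nbhd_of_ideal U V A ->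
      \forall t \near 0^'+, A (alpha t).
Proof.
move=> [hH [[Bs [cBs [oBs baseB]]] hLE]] _ cK _ [x0 [nKx0 Ueq]] calpha aU Kp alim.
have clK : closed K := compact_closed hH cK.
have oNK : open (~` K) by exact: closed_openC.
have oU : open U by rewrite Ueq; exact: comp_open.
have UnK : U `<=` ~` K by rewrite Ueq; exact: connected_component_sub.
have Ucl y : closure U y -> ~ K y -> U y.
  by rewrite Ueq => cy nky; apply: comp_closure_sub.
have cl_cpt (C : set S) : compact C -> closure C = C.
  by move=> cC; rewrite -(closure_id C).1 //; exact: compact_closed.
have cover_all (P : set S) y : open P -> P y ->
    exists b, [/\ Bs b, b y, compact (closure b) & closure b `<=` P].
  move=> oP Py; have [_ [Q' [C [_ [oQ' Q'y] cC [Q'C CP]]]]] := chart_local hLE y P oP Py.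
  have [b [Bb [by0 bQ]]] := baseB Q' oQ' y Q'y.
  have bC : closure b `<=` C.
    by rewrite -(cl_cpt C cC); apply: closure_subset => z /bQ /Q'C.
  exists b; split => //; last by move=> z /bC /CP.
  exact: (subclosed_compact (@closed_closure _ b) cC bC).
have [Ob [oO KO cclO]] : exists Ob : set S, [/\ open Ob, K `<=` Ob & compact (closure Ob)].
  have [e1 [e1G e1all]] := @enum_good _ Bs [set b | Bs b /\ compact (closure b)] cBs (fun b h => h.1).
  have oe1 n : open (e1 n) by case: (e1G n) => [->|[]]; [exact: open0|move=> /oBs].
  have ce1 n : compact (closure (e1 n)).
    by case: (e1G n) => [->|[]] //; rewrite closure0; exact: compact0.
  have [N1 KN1] : exists N, K `<=` \bigcup_(i in [set i | (i < N)%N]) e1 i.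
    apply: cover_nat => // y Ky.
    have [b [Bb by0 cb _]] := cover_all setT y openT I.
    by have [n en] := e1all b (conj Bb cb); exists n => //; rewrite en.
  exists (\bigcup_(i in [set i | (i < N1)%N]) e1 i); split => //.
    by apply: bigcup_open => i _; exact: oe1.
  have cA := @accum_compact _ set0 (closure \o e1) N1 compact0 ce1.
  apply: (subclosed_compact (@closed_closure _ _) cA).
  rewrite -(cl_cpt _ cA); apply: closure_subset => y [i iN e1y].
  by apply: (@accum_f _ set0 (closure \o e1) _ _ iN); apply: subset_closure.
pose L0 := (closure Ob `\` Ob) `&` U.
have cL0 : compact L0.
  have -> : L0 = (closure Ob `&` ~` Ob) `&` closure U.
    apply/seteqP; split => y [[c1 c2] c3]; split => //; first exact: subset_closure.
    by apply: Ucl => // Ky; apply: c2; apply: KO.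
  apply: compact_closedI; last exact: closed_closure.
  by apply: compact_closedI => //; exact: open_closedC.
have [e [eG eall]] := @enum_good _ Bs [set b | [/\ Bs b, compact (closure b) & closure b `<=` U]] cBs (fun b h => let: And3 h1 _ _ := h in h1).
have oe n : open (e n) by case: (eG n) => [->|[]]; [exact: open0|move=> /oBs].
have ce n : compact (closure (e n)).
  by case: (eG n) => [->|[]] //; rewrite closure0; exact: compact0.
have eU n : closure (e n) `<=` U.
  by case: (eG n) => [->|[]] //; rewrite closure0.
pose L := accum L0 (closure \o e).
have cL n : compact (L n) by exact: accum_compact.
have LU n : L n `<=` U by apply: accum_sub => //; exact: subIsetr.
have clL n : closed (L n) by exact: compact_closed.
have exhaust (C : set S) : compact C -> C `<=` U -> exists N, C `<=` L N.
  move=> cC CU; have [N HN] : exists N, C `<=` \bigcup_(i in [set i | (i < N)%N]) e i.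
    apply: cover_nat => // y /CU Uy.
    have [b [Bb by0 cb bU]] := cover_all U y oU Uy.
    by have [n en] := eall b (And3 Bb cb bU); exists n => //; rewrite en.
  exists N => y /HN [i iN eiy].
  by apply: (@accum_f _ L0 (closure \o e) _ _ iN); apply: subset_closure.
have pL n : ~ L n p by move=> /LU /UnK.
have s_ex n : exists s : Rdefinitions.R, 0 < s /\
    (forall t, 0 < t -> t <= s -> Ob (alpha t) /\ ~ L n (alpha t)) /\ s <= 1.
  have : \forall t \near 0^'+, (Ob `&` ~` L n) (alpha t).
    apply: (alim (Ob `&` ~` L n)); apply: open_nbhs_nbhs; split.
      exact: openI oO (closed_openC (clL n)).
    by split; [exact: KO | exact: pL].
  move=> /near0P [d d0 Hd]; exists (Num.min (d / 2) 1); split.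
    by rewrite lt_min divr_gt0 // ltr01.
  split; last by rewrite ge_min lexx orbT.
  move=> t t0 tle; apply: Hd => //; apply: (le_lt_trans tle).
  by rewrite gt_min; apply/orP; left; rewrite ltr_pdivrMr // ltr_pMr // ltr1n.
have /choice [s hs] := s_ex.
pose tt := fix tt n := if n is m.+1 then Num.min (tt m) (s m.+1) else s 0.
have tt_pos n : 0 < tt n.
  by elim: n => [|n IH] /=; [exact: (hs 0).1 | rewrite lt_min IH (hs n.+1).1].
have tt_le n : tt n <= s n.
  by case: n => [|n] /=; [exact: lexx | rewrite ge_min lexx orbT].
have tt_dec n : tt n.+1 <= tt n by rewrite /= ge_min lexx.
have good n t : 0 < t -> t <= tt n -> Ob (alpha t) /\ ~ L n (alpha t) /\ t <= 1.
  move=> t0 tle; have tle' := le_trans tle (tt_le n).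
  have [h1 h2] := (hs n).2.1 t t0 tle'.
  by split => //; split => //; exact: le_trans tle' (hs n).2.2.
pose V n := connected_component (U `&` ~` L n) (alpha (tt n)).
have tailV n t : 0 < t -> t <= tt n -> V n (alpha t).
  move=> t0 tle.
  have sub : alpha @` `]0, tt n]%classic `<=` U `&` ~` L n.
    move=> y [u]; rewrite /= in_itv /= => /andP [u0 ule] <-.
    have [_ [h2 h3]] := good n u u0 ule.
    by split=> //; apply: aU; rewrite /= in_itv /= u0 h3.
  have cB : connected (alpha @` `]0, tt n]%classic).
    apply: connected_continuous_connected.
      by apply/connected_intervalP; exact: interval_is_interval.
    apply: continuous_subspaceW calpha => u; rewrite /= !in_itv /= => /andP [u0 ule].
    by rewrite u0 /=; exact: le_trans ule (good n _ (tt_pos n) (lexx _)).2.2.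
  apply: (connected_component_max _ sub cB).
    by exists (tt n) => //; rewrite /= in_itv /= tt_pos lexx.
  by exists t => //; rewrite /= in_itv /= t0 tle.
have oV n : open (V n).
  by apply: comp_open => //; apply: openI oU (closed_openC (clL n)).
have VUL n : V n `<=` U `&` ~` L n by exact: connected_component_sub.
have Vdec n : V n.+1 `<=` V n.
  have e1 := tailV n _ (tt_pos n.+1) (tt_dec n).
  have -> : V n = connected_component (U `&` ~` L n) (alpha (tt n.+1)).
    exact: same_connected_component e1.
  apply: connected_component_max; last exact: component_connected.
    exact: tailV n.+1 _ (tt_pos _) (lexx _).
  move=> y /VUL [Uy nL]; split => // Ly; apply: nL.
  exact: (@accum_mono _ L0 (closure \o e) _ _ (leqnSn n)).
have evV n : \forall t \near 0^'+, V n (alpha t).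
  have h := @near0_le (tt n) (tt_pos n); near=> t.
  have /andP [t0 tle] : 0 < t <= tt n by near: t.
  exact: tailV.
Unshelve. all: end_near.
have VU n : V n `<=` U by move=> y /VUL [].
have VnL n : V n `<=` ~` L n by move=> y /VUL [].
exists V; split; [split; [exact: Vdec|split]|split].
- move=> n; split; first by exists (alpha (tt n)); exact: tailV n _ (tt_pos n) (lexx _).
  split; first exact: VU.
  split; first by exists (V n); split => //; rewrite setIidl //; exact: VU.
  split; first exact: component_connected.
  split.
    move=> cc; have clc := compact_closed hH cc.
    suff : (closure (V n) `&` U) p by move=> [_ /UnK].
    rewrite (closure_id (closure (V n) `&` U)).1 // => B /alim nB.
    have [t [h1 h2]] := filter_ex (filterI (evV n) nB).
    by exists (alpha t); split => //; split; [exact: subset_closure h1|exact: VU h1].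
  have riE : rel_interior U (V n) = V n.
    apply/seteqP; split; first by move=> y [W [_ WV] Wy]; exact: WV.
    move=> y Vy; exists (V n) => //; split => //.
    by exists (V n); split => //; rewrite setIidl //; exact: VU.
  have -> : rel_frontier U (V n) = (closure (V n) `&` ~` V n) `&` L n.
    rewrite /rel_frontier riE /rel_closure; apply/seteqP; split.
      move=> y [[cy Uy] nVy]; split => //; apply: contrapT => nLy; apply: nVy.
      apply: comp_closure_sub => //; first exact: openI oU (closed_openC (clL n)).
    move=> y [[cy nVy] Ly]; split => //; split => //; exact: LU Ly.
  rewrite setIC; apply: compact_closedI => //.
  by apply: closedI; [exact: closed_closure | exact: open_closedC].
- move=> C cC CU; have [N CN] := exhaust C cC CU; exists N => m Nm.
  apply/seteqP; split => // y [Cy Vy]; apply: (VnL m y Vy).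
  exact: (@accum_mono _ L0 (closure \o e) _ _ Nm) _ (CN y Cy).
- exists 0%N.
  have V0O : V 0%N `<=` Ob.
    have sep : separated Ob (~` closure Ob).
      split; first by rewrite setICr.
      apply/seteqP; split => // y [Oy cy].
      have [z [nz Oz]] := cy Ob (open_nbhs_nbhs (conj oO Oy)).
      by exfalso; apply: nz; exact: subset_closure Oz.
    have : V 0%N `<=` Ob `|` ~` closure Ob.
      move=> y Vy; case: (pselect (Ob y)) => Oy; first by left.
      right => cy; apply: (VnL 0%N y Vy); split; last exact: VU Vy.
      by split.
    move=> /(connected_subset sep) /(_ (@component_connected _ _ _)) [//|VC].
    have [Oa _] := good 0%N _ (tt_pos 0%N) (lexx _).
    have := VC _ (tailV 0%N _ (tt_pos 0%N) (lexx _)).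
    by move=> /(_ (subset_closure Oa)).
  apply: (subclosed_compact (@closed_closure _ _) cclO).
  exact: closure_subset.
- move=> A [_ [_ [_ [_ [V' [_ [[eq2 _] [n0 H]]]]]]]].
  have [m Vm] := eq2 n0.
  apply: filterS (evV m) => t Vt; apply: (H n0 (leqnn n0)); exact: (Vm (alpha t) Vt).
Qed.
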